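(* Let $\mathcal{C}$ be an $(n,k,d)$ linear MDS code over a finite field $\mathbb{F}_q$ with $d \ge 3$, and set $m = \min\{k, n-k-1\}$. Then $$\rho(\mathcal{C}) \le \binom{n}{d-2} - U(n,d-2,m).$$
   Context: An $(n,k,d)$ linear MDS code is a linear code over $\mathbb{F}_q$ of length $n$, dimension $k$ and minimum Hamming distance $d = n-k+1$. A parity-check matrix for $\mathcal{C}$ is any matrix (possibly with linearly dependent rows) whose rows span $\mathcal{C}^\perp$. For a parity-check matrix $H$, the stopping distance $s(H)$ is the largest integer such that for every set of $s(H)-1$ or fewer columns of $H$, the projection of $H$ onto those columns contains at least one row with exactly one nonzero entry. The stopping redundancy $\rho(\mathcal{C})$ is the smallest number of rows of a parity-check matrix $H$ for $\mathcal{C}$ with $s(H) = d$. An $(n,4,w)$ constant-weight code is a set of binary vectors of length $n$ and Hamming weight $w$ any two of which are at Hamming distance at least $4$. $U(n,w,m)$ denotes the largest possible cardinality of a union of $m$ constant-weight codes, each with parameters $(n,4,w)$. *)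

(* Defs.v *)
From HB Require Import structures.
From mathcomp Require Import all_boot all_order all_algebra.
Set Implicit Arguments. Unset Strict Implicit. Unset Printing Implicit Defensive.
Import GRing.Theory.
Local Open Scope ring_scope.

(* A linear code of length n and dimension k over F is given by a full-rank
   generator matrix G : 'M[F]_(k, n); its codewords are the row vectors in the
   row space of G. *)
Definition codeword (F : fieldType) (k n : nat) (G : 'M[F]_(k, n)) (c : 'rV[F]_n) : bool :=
  (c <= G)%MS.

Definition wt (F : fieldType) (n : nat) (c : 'rV[F]_n) : nat :=
  #|[set j : 'I_n | c ord0 j != 0]|.

Definition min_distance (F : fieldType) (k n : nat) (G : 'M[F]_(k, n)) (d : nat) : Prop :=
  (exists c, codeword G c /\ c != 0 /\ wt c = d) /\
  (forall c, codeword G c -> c != 0 -> (d <= wt c)%N).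

Definition dual_code (F : fieldType) (k n : nat) (G : 'M[F]_(k, n)) : 'M[F]_n :=
  kermx G^T.

(* H is a parity-check matrix (rows possibly dependent) : its rows span C^perp *)
Definition parity_check (F : fieldType) (k n r : nat) (G : 'M[F]_(k, n)) (H : 'M[F]_(r, n)) : Prop :=
  (H == dual_code G)%MS.

Definition covered (F : fieldType) (r n : nat) (H : 'M[F]_(r, n)) (S : {set 'I_n}) : bool :=
  [exists i : 'I_r, #|[set j in S | H i j != 0]| == 1%N].

Definition stop_ok (F : fieldType) (r n : nat) (H : 'M[F]_(r, n)) (s : nat) : Prop :=
  forall S : {set 'I_n}, S != set0 -> (#|S| <= s.-1)%N -> covered H S.

Definition stopping_distance_is (F : fieldType) (r n : nat) (H : 'M[F]_(r, n)) (s : nat) : Prop :=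
  stop_ok H s /\ ~ stop_ok H s.+1.

Definition stop_achievable (F : fieldType) (k n : nat) (G : 'M[F]_(k, n)) (d r : nat) : Prop :=
  exists H : 'M[F]_(r, n), parity_check G H /\ stopping_distance_is H d.

Definition stopping_redundancy_is (F : fieldType) (k n : nat) (G : 'M[F]_(k, n)) (d rho : nat) : Prop :=
  stop_achievable G d rho /\ (forall r, stop_achievable G d r -> (rho <= r)%N).

(* binary vectors of length n are identified with their supports {set 'I_n};
   the Hamming distance is the size of the symmetric difference *)
Definition hdist (n : nat) (A B : {set 'I_n}) : nat := #|(A :\: B) :|: (B :\: A)|.

Definition cw_code (n w : nat) (C : {set {set 'I_n}}) : bool :=
  [forall A in C, #|A| == w] &&
  [forall A in C, forall B in C, (A != B) ==> (4 <= hdist A B)%N].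

Definition U (n w m : nat) : nat :=
  \max_(f : {ffun 'I_m -> {set {set 'I_n}}} | [forall i, cw_code w (f i)])
     #|\bigcup_(i < m) f i|.

(* Main.v *)
Require Import Defs.
From mathcomp Require Import all_boot all_order all_algebra.
From mathcomp Require Import zify.
From Stdlib Require Import Classical.
Set Implicit Arguments. Unset Strict Implicit. Unset Printing Implicit Defensive.
Import GRing.Theory.

Section Part0.

Lemma card_bigcup_leq (T : finType) m (P : 'I_m -> {set T}) :
  (#|\bigcup_(i < m) P i| <= \sum_(i < m) #|P i|)%N.
Proof.
elim: m P => [|m IH] P; first by rewrite big_ord0 big_ord0 cards0.
rewrite big_ord_recr big_ord_recr /= cardsU.
have := IH (fun i => P (widen_ord (leqnSn m) i)). move=> h.
apply: leq_trans (leq_subr _ _) _; by rewrite leq_add2r.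
Qed.

Lemma pigeon (T : finType) m (X : {set T}) (P : 'I_m -> {set T}) :
  X \subset \bigcup_(i < m) P i -> (forall i, #|P i| <= 1)%N -> (#|X| <= m)%N.
Proof.
move=> sX H1. apply: leq_trans (subset_leq_card sX) _.
apply: leq_trans (card_bigcup_leq P) _.
apply: (@leq_trans (\sum_(i < m) 1)%N); first by apply: leq_sum => i _.
by rewrite sum_nat_const card_ord muln1.
Qed.

Lemma extend_set (T : finType) (A B : {set T}) t :
  A \subset B -> (#|A| + t <= #|B|)%N ->
  exists C : {set T}, [/\ A \subset C, C \subset B & #|C| = #|A| + t]%N.
Proof.
move=> sAB; elim: t => [|t IH] Ht; first by exists A; rewrite addn0.
have [|C [sAC sCB cC]] := IH; first lia.
have : ~~ (B \subset C).
  apply/negP => sBC. have := subset_leq_card sBC. lia.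
case/subsetPn => x xB xC.
exists (x |: C); split.
- by apply: subset_trans sAC (subsetUr _ _).
- by rewrite subUset sub1set xB.
- by rewrite cardsU1 xC cC; lia.
Qed.

Lemma min_exists (P : nat -> Prop) r0 : P r0 -> exists r, P r /\ forall r', P r' -> (r <= r')%N.
Proof.
elim/ltn_ind: r0 => r0 IH Pr0.
case: (classic (exists r', P r' /\ (r' < r0)%N)) => [[r' [Pr' lt]]|N].
  exact: IH Pr'.
exists r0; split => // r' Pr'. rewrite leqNgt; apply/negP => lt. apply: N; by exists r'.
Qed.

Lemma hdist_le2 n (X Y : {set 'I_n}) w :
  #|X| = w -> #|Y| = w -> (w - 1 <= #|X :&: Y|)%N -> (hdist X Y <= 2)%N.
Proof.
move=> cX cY cI; rewrite /hdist cardsU !cardsD (setIC Y X).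
have := subset_leq_card (subsetIl X Y). lia.
Qed.

End Part0.

Section Part1.
Local Open Scope ring_scope.

Lemma vanish (F : fieldType) p n (V : 'M[F]_(p,n)) (T : {set 'I_n}) :
  (#|T| < \rank V)%N ->
  exists v : 'rV[F]_n, [/\ (v <= V)%MS, v != 0 & forall j, j \in T -> v ord0 j = 0].
Proof.
move=> rT.
pose P : 'M[F]_(n, #|T|) := \matrix_(i, t) (i == enum_val t)%:R.
pose W := (V :&: kermx P)%MS.
have rW: (0 < \rank W)%N.
  have := mxrank_sum_cap V (kermx P). rewrite mxrank_ker.
  have := rank_leq_col (V + kermx P)%MS. have := rank_leq_col P. rewrite /W. lia.
have nW : W != 0 by rewrite -mxrank_eq0 -lt0n.
have [i Wi] : exists i, row i W != 0.
  case: (pickP (fun i => row i W != 0)) => [i Wi|H]; first by exists i.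
  case/negP: nW; apply/eqP/row_matrixP => i; rewrite row0; apply/eqP.
  by have := H i => /negbFE.
exists (row i W); split => //.
- exact: submx_trans (row_sub i W) (capmxSl _ _).
- move=> j jT.
  have : (row i W <= kermx P)%MS := submx_trans (row_sub i W) (capmxSr _ _).
  move/sub_kermxP => /(congr1 (fun M : 'M[F]_(1, #|T|) => M ord0 (enum_rank_in jT j))).
  rewrite !mxE (bigD1 j) //= !mxE enum_rankK_in // eqxx mulr1 big1 ?addr0 //.
  by move=> j' nj; rewrite !mxE enum_rankK_in // (negbTE nj) mulr0.
Qed.

End Part1.

Section Part2.
Local Open Scope ring_scope.

Lemma orth (F : fieldType) k n (G : 'M[F]_(k,n)) (c u : 'rV[F]_n) :
  (c <= G)%MS -> (u <= kermx G^T)%MS -> \sum_j c ord0 j * u ord0 j = 0.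
Proof.
case/submxP => D -> /sub_kermxP uG.
have : (D *m G *m u^T) = 0.
  by rewrite -mulmxA -[G]trmxK -trmx_mul uG trmx0 mulmx0.
move/(congr1 (fun M : 'M[F]_(1,1) => M ord0 0)); rewrite !mxE => H.
rewrite -[RHS]H; by apply: eq_bigr => j _; rewrite !mxE.
Qed.

Lemma single (F : fieldType) n (u v : 'rV[F]_n) j :
  \sum_i u ord0 i * v ord0 i = 0 -> (forall i, i != j -> u ord0 i * v ord0 i = 0) ->
  u ord0 j * v ord0 j = 0.
Proof.
by rewrite (bigD1 j) //= => + H; rewrite big1 ?addr0 // => i /H.
Qed.

Lemma orth_notcov (F : fieldType) n (h c : 'rV[F]_n) :
  \sum_i h ord0 i * c ord0 i = 0 ->
  #|[set j in [set j | c ord0 j != 0] | h ord0 j != 0]| != 1%N.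
Proof.
move=> sum0; apply/negP => /cards1P [x Ex].
have xin : x \in [set j in [set j | c ord0 j != 0] | h ord0 j != 0] by rewrite Ex set11.
move: xin; rewrite !inE => /andP [cx hx].
have Hi : forall i, i != x -> h ord0 i * c ord0 i = 0.
  move=> i ix; have : i \notin [set j in [set j | c ord0 j != 0] | h ord0 j != 0].
    by rewrite Ex in_set1.
  rewrite !inE negb_and !negbK => /orP [/eqP-> | /eqP->]; by rewrite ?mulr0 ?mul0r.
have /eqP := single sum0 Hi; by rewrite mulf_eq0 (negbTE cx) (negbTE hx).
Qed.

Lemma k_pos (F : fieldType) k n (G : 'M[F]_(k,n)) d :
  \rank G = k -> min_distance G d -> (0 < k)%N.
Proof.
move=> rG [[c [cG [c0 _]]] _]; rewrite lt0n; apply/negP => /eqP k0.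
subst k; move: cG; rewrite /codeword [G]flatmx0 => /submx0null c00.
by rewrite c00 eqxx in c0.
Qed.

Lemma dual_zeros (F : fieldType) k n (G : 'M[F]_(k,n)) d :
  \rank G = k -> min_distance G d -> d = (n - k + 1)%N -> (3 <= d)%N ->
  forall u : 'rV[F]_n, (u <= kermx G^T)%MS -> u != 0 ->
  leq #|[set j | u ord0 j == 0]| (n - k - 1).
Proof.
move=> rG md dE d3 u uD u0.
have kp := k_pos rG md.
rewrite leqNgt; apply/negP => Zbig.
have [j0 uj0] : exists j0 : 'I_n, u ord0 j0 != 0.
  case: (pickP (fun j : 'I_n => u ord0 j != 0)) => [j Wi|H]; first by exists j.
  case/negP: u0; apply/eqP/rowP => j; rewrite mxE.
  by apply/eqP; have := H j => /negbFE.
pose K := [set j | u ord0 j != 0].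
have cK : (#|K| <= k)%N.
  have := cardsC [set j | u ord0 j == 0]; rewrite card_ord.
  have -> : ~: [set j | u ord0 j == 0] = K by apply/setP => j; rewrite !inE.
  lia.
pose A := K :\ j0.
have cA : (#|A| <= (k-1))%N.
  have := cardsD1 j0 K; rewrite inE uj0 /=. rewrite -/A => h. move: cK. rewrite h. lia.
have sAB : A \subset ~: [set j0] by apply/subsetP => j; rewrite !inE => /andP [].
have [T [sAT sTB cT]] := @extend_set _ A (~: [set j0]) ((k-1) - #|A|) sAB
  (ltac:(rewrite cardsC1 card_ord; lia)).
have [c [cG c0 cT0]] := vanish (V := G) (T := T) (ltac:(rewrite cT rG; lia)).
have sum0 := orth cG uD.
have Hi : forall i, i != j0 -> c ord0 i * u ord0 i = 0.
  move=> i ij0; case: (boolP (u ord0 i == 0)) => [/eqP-> | ui]; first by rewrite mulr0.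
  rewrite cT0 ?mul0r //; apply: (subsetP sAT); by rewrite !inE ij0 ui.
have /eqP := single sum0 Hi; rewrite mulf_eq0 (negbTE uj0) orbF => /eqP cj0.
have wc : (wt c <= n - k)%N.
  rewrite /wt.
  have sub : j0 |: T \subset ~: [set j | c ord0 j != 0].
    apply/subsetP => j; rewrite !inE => /orP [/eqP -> | jT]; first by rewrite cj0 eqxx.
    by rewrite cT0 // eqxx.
  have nT : j0 \notin T by apply/negP => /(subsetP sTB); rewrite !inE eqxx.
  have := subset_leq_card sub; rewrite cardsU1 (negbTE nT) /=.
  have := cardsC [set j | c ord0 j != 0]; rewrite card_ord.
  move: (#|[set j | c ord0 j != 0]|) (#|~: [set j | c ord0 j != 0]|) => a b. move: cT cA kp; move: #|T| #|A| => t a'. lia.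
have := (md.2 c cG c0). lia.
Qed.

End Part2.

Section Part3.

Lemma avoid n m0 (f : 'I_m0 -> {set {set 'I_n}}) (X : {set 'I_n}) (g : 'I_n -> {set 'I_n}) :
  (forall i A B, A \in f i -> B \in f i -> A != B -> 4 <= hdist A B) ->
  (forall x1 x2, x1 \in X -> x2 \in X -> x1 != x2 -> g x1 != g x2 /\ hdist (g x1) (g x2) <= 2) ->
  m0 < #|X| ->
  exists2 x, x \in X & g x \notin \bigcup_(i < m0) f i.
Proof.
move=> cw gX big.
case: (pickP [pred x | (x \in X) && (g x \notin \bigcup_(i < m0) f i)]) => [x /andP [xX gx]|none].
  by exists x.
exfalso.
have : #|X| <= m0.
  apply: (@pigeon _ m0 X (fun i => [set x in X | g x \in f i])).
    apply/subsetP => x xX; have := none x; rewrite /= xX /= => /negbFE /bigcupP [i _ gi].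
    by apply/bigcupP; exists i => //; rewrite inE xX.
  move=> i; apply/card_le1_eqP => x1 x2; rewrite !inE => /andP [x1X g1] /andP [x2X g2].
  apply/eqP; apply/negP => /negP ne.
  have [gne hd] := gX x2 x1 x2X x1X ne.
  have := cw i _ _ g2 g1 gne. lia.
lia.
Qed.

Lemma comb n k w m0 (f : 'I_m0 -> {set {set 'I_n}}) :
  w = n - k - 1 -> 1 <= w -> m0 <= k -> m0 <= w ->
  (forall i A B, A \in f i -> B \in f i -> A != B -> 4 <= hdist A B) ->
  forall S : {set 'I_n}, S != set0 -> #|S| <= w.+1 ->
  exists T : {set 'I_n}, [/\ #|T| = w, T \notin \bigcup_(i < m0) f i & #|S :\: T| = 1].
Proof.
move=> wE w1 mk mw cw S S0 cS.
have cD1 : forall (A : {set 'I_n}) x, x \in A -> #|A :\ x| = #|A| - 1.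
  by move=> A x xA; have := cardsD1 x A; rewrite xA /=; lia.
case: (ltngtP #|S| w.+1) => [lt|gt|eq]; [ | by exfalso; lia | ]; last first.
  have gX : forall x1 x2, x1 \in S -> x2 \in S -> x1 != x2 ->
      (S :\ x1 != S :\ x2) /\ hdist (S :\ x1) (S :\ x2) <= 2.
    move=> x1 x2 x1S x2S ne; split.
      apply/negP => /eqP E.
      have : x2 \in S :\ x1 by rewrite !inE eq_sym ne x2S.
      by rewrite E !inE eqxx.
    apply: (@hdist_le2 _ _ _ w); rewrite ?cD1 //; try lia.
    have := cardsD1 x2 (S :\ x1); rewrite !inE eq_sym ne x2S /= => h.
    have : S :\ x1 :\ x2 \subset (S :\ x1) :&: (S :\ x2).
      by apply/subsetP => y; rewrite !inE => /and3P [-> -> ->].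
    move/subset_leq_card; rewrite cD1 // in h.
    move: h eq; move: (#|S :\ x1 :\ x2|) (#|(S :\ x1) :&: (S :\ x2)|) (#|S|) => a b c. lia.
  have [x xS gx] := @avoid n m0 f S (fun j => S :\ j) cw gX (ltac:(lia)).
  exists (S :\ x); split => //; first by rewrite cD1 //; lia.
  have -> : S :\: (S :\ x) = [set x].
    apply/setP => y; rewrite !inE.
    case: (eqVneq y x) => [->|yx] /=.
      by rewrite xS.
    by rewrite andNb.
  by rewrite cards1.
have [j jS] := set0Pn _ S0.
have sAB : S :\ j \subset ~: [set j] by apply/subsetP => y; rewrite !inE => /andP [].
have [A [sSA sAj cA]] := @extend_set _ (S :\ j) (~: [set j]) (w - 1 - #|S :\ j|) sAB
  (ltac:(rewrite cardsC1 card_ord cD1 //; lia)).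
have cAw : #|A| = w - 1 by rewrite cA cD1 //; lia.
have jA : j \notin A by apply/negP => /(subsetP sAj); rewrite !inE eqxx.
have cX : #|~: (j |: A)| = n - w.
  have := cardsC (j |: A); rewrite card_ord cardsU1 jA /=.
  move: cAw; move: (#|~: (j |: A)|) (#|A|) => b a; lia.
have cxA : forall x, x \in ~: (j |: A) -> #|x |: A| = w.
  move=> x; rewrite !inE negb_or => /andP [_ xA]; rewrite cardsU1 xA /=; move: cAw; move: (#|A|) => a; lia.
have gX : forall x1 x2, x1 \in ~: (j |: A) -> x2 \in ~: (j |: A) -> x1 != x2 ->
    (x1 |: A != x2 |: A) /\ hdist (x1 |: A) (x2 |: A) <= 2.
  move=> x1 x2 x1X x2X ne; split.
    apply/negP => /eqP E.
    have : x1 \in x1 |: A by rewrite !inE eqxx.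
    rewrite E !inE (negbTE ne) /=; move: x1X; rewrite !inE negb_or => /andP [_ /negbTE ->] //.
  apply: (@hdist_le2 _ _ _ w); rewrite ?cxA //.
  have : A \subset (x1 |: A) :&: (x2 |: A).
    by apply/subsetP => y yA; rewrite !inE yA !orbT.
  move/subset_leq_card; rewrite cAw. lia.
have [x xX gx] := @avoid n m0 f (~: (j |: A)) (fun x => x |: A) cw gX (ltac:(rewrite cX; lia)).
exists (x |: A); split => //; first exact: cxA.
have -> : S :\: (x |: A) = [set j].
  apply/setP => y; rewrite !inE; case: (eqVneq y j) => [->|yj] /=.
    move: xX; rewrite !inE negb_or => /andP [xj _]. by rewrite (eq_sym j) (negbTE xj) (negbTE jA) jS.
  case: (boolP (y \in S)) => yS; last by rewrite andbF.
  have -> : y \in A by apply: (subsetP sSA); rewrite !inE yj yS.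
  by rewrite orbT.
by rewrite cards1.
Qed.

End Part3.

Theorem theorem18 (F : finFieldType) (n k d : nat) (G : 'M[F]_(k, n)) :
  \rank G = k ->
  min_distance G d ->
  d = (n - k + 1)%N ->
  (3 <= d)%N ->
  exists rho : nat,
    stopping_redundancy_is G d rho /\
    (rho <= 'C(n, d - 2) - U n (d - 2) (minn k (n - k - 1)))%N.
Proof.
move=> rG md dE d3.
have kp := k_pos rG md.
set w := (d - 2)%N.
have wE : w = (n - k - 1)%N by rewrite /w; lia.
set m0 := minn k (n - k - 1).
have [f fP fE] : {f : {ffun 'I_m0 -> {set {set 'I_n}}} | [forall i, cw_code w (f i)]
     & U n w m0 = #|\bigcup_(i < m0) f i|}.
  rewrite /U; apply: eq_bigmax_cond; apply/card_gt0P; exists [ffun => set0].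
  rewrite unfold_in; apply/forallP => i; rewrite ffunE /cw_code.
  by apply/andP; split; apply/forall_inP => A; rewrite in_set0.
have cw : forall i A B, A \in f i -> B \in f i -> A != B -> (4 <= hdist A B)%N.
  move=> i A B Ai Bi AB; have := forallP fP i; case/andP => _ /forall_inP /(_ A Ai).
  by move/forall_inP /(_ B Bi) /implyP /(_ AB).
have cwA : forall i A, A \in f i -> #|A| = w.
  move=> i A Ai; have := forallP fP i; case/andP => /forall_inP /(_ A Ai) /eqP.
  done.
pose R := \bigcup_(i < m0) f i.
pose Tf := [set T : {set 'I_n} | (#|T| == w) && (T \notin R)].
have cTf : #|Tf| = ('C(n, w) - U n w m0)%N.
  have -> : Tf = [set T : {set 'I_n} | #|T| == w] :\: R.
    by apply/setP => T; rewrite !inE andbC.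
  rewrite cardsDS ?card_draws ?card_ord ?fE //.
  apply/subsetP => T /bigcupP [i _ Ti]; by rewrite inE (cwA i).
pose D := kermx G^T.
have rD : \rank D = (n - k)%N by rewrite /D mxrank_ker mxrank_tr rG.
pose Pb (T : {set 'I_n}) (v : 'rV[F]_n) := (v <= D)%MS && [forall j, (v ord0 j == 0%R) == (j \in T)].
have hex : forall T : {set 'I_n}, #|T| = w -> exists v, Pb T v.
  move=> T cT.
  have [v [vD v0 vT]] := vanish (V := D) (T := T) (ltac:(rewrite cT rD; lia)).
  exists v; rewrite /Pb vD /=.
  have dz := dual_zeros rG md dE d3 vD v0.
  have sTZ : T \subset [set j | v ord0 j == 0%R].
    by apply/subsetP => j jT; rewrite inE vT.
  have : T == [set j | v ord0 j == 0%R].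
    rewrite eqEcard sTZ /= cT wE; exact: dz.
  move/eqP => TE; apply/forallP => j; by rewrite TE inE.
pose h T := odflt 0%R [pick v | Pb T v].
have hP : forall T : {set 'I_n}, #|T| = w -> Pb T (h T).
  move=> T cT; rewrite /h; case: pickP => [v //| H].
  by have [v Pv] := hex T cT; rewrite H in Pv.
pose H : 'M[F]_(#|Tf|, n) := (\matrix_(i, j) h (enum_val i) ord0 j)%R.
have rowH : forall i, row i H = h (enum_val i).
  by move=> i; apply/rowP => j; rewrite !mxE.
have TfP : forall T : {set 'I_n}, T \in Tf -> #|T| = w /\ T \notin R.
  by move=> T; rewrite inE => /andP [/eqP -> ->].
have rowD : forall i, (row i H <= D)%MS.
  move=> i; rewrite rowH; have [cT _] := TfP _ (enum_valP i).
  by have /andP [] := hP _ cT.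
have HD : (H <= D)%MS by apply/row_subP.
have cov : forall T S : {set 'I_n}, T \in Tf -> #|S :\: T| = 1%N -> covered H S.
  move=> T S TT cS; apply/existsP; exists (enum_rank_in TT T).
  have [cT _] := TfP _ TT.
  have /andP [_ /forallP hT] := hP _ cT.
  suff -> : [set j in S | H (enum_rank_in TT T) j != 0%R] = S :\: T by rewrite cS.
  apply/setP => j; rewrite !inE !mxE enum_rankK_in //.
  have /eqP <- := hT j; by rewrite andbC.
have dm1 : d.-1 = w.+1.
  rewrite /w; case: (d) dE d3 => //= d' _ h3. lia.
have so : stop_ok H d.
  move=> S S0 cS.
  have w1 : (1 <= w)%N by lia.
  have mk : (m0 <= k)%N by rewrite /m0 geq_minl.
  have mw : (m0 <= w)%N by rewrite /m0 wE geq_minr.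
  have [T [cT TR cST]] := comb (f := f) wE w1 mk mw cw S0 (ltac:(rewrite -dm1; exact: cS)).
  by apply: (cov T) cST; rewrite inE cT eqxx TR.
have nso : ~ stop_ok H d.+1.
  case: md.1 => c [cG [c0 wc]].
  move=> so'.
  have cS : #|[set j | c ord0 j != 0%R]| = d by [].
  have S0 : [set j | c ord0 j != 0%R] != set0 by rewrite -card_gt0 cS; lia.
  have cS' : (#|[set j | c ord0 j != 0%R]| <= d.+1.-1)%N by rewrite cS.
  case/existsP: (so' _ S0 cS') => i ci.
  have sum0 : (\sum_j row i H ord0 j * c ord0 j = 0)%R.
    rewrite -[RHS](orth cG (rowD i)); apply: eq_bigr => j _; exact: mulrC.
  have := orth_notcov sum0.
  have -> : [set j in [set j | c ord0 j != 0%R] | row i H ord0 j != 0%R]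
         = [set j in [set j | c ord0 j != 0%R] | H i j != 0%R].
    by apply/setP => j; rewrite !inE mxE.
  by rewrite ci.
have pc : parity_check G H.
  rewrite /parity_check -(mxrank_leqif_eq HD).2 eqn_leq (mxrank_leqif_eq HD).1 /=.
  rewrite leqNgt; apply/negP => lt.
  pose V := kermx H^T.
  have rV : \rank V = (n - \rank H)%N by rewrite /V mxrank_ker mxrank_tr.
  have [T0 [_ _ cT0]] := @extend_set 'I_n set0 setT k (sub0set _)
     (ltac:(rewrite cards0 cardsT card_ord; lia)).
  have [c [cV c0 cT]] := vanish (V := V) (T := T0)
     (ltac:(rewrite cT0 cards0 rV; rewrite rD in lt; move: lt; move: (\rank H) => r; lia)).
  have [j0 cj0] : exists j0 : 'I_n, c ord0 j0 != 0%R.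
    case: (pickP (fun j : 'I_n => c ord0 j != 0%R)) => [j Wi|Hn]; first by exists j.
    case/negP: c0; apply/eqP/rowP => j; rewrite mxE.
    by apply/eqP; have := Hn j => /negbFE.
  have S0 : [set j | c ord0 j != 0%R] != set0 by apply/set0Pn; exists j0; rewrite inE.
  have cS : (#|[set j | c ord0 j != 0%R]| <= d.-1)%N.
    have sub : [set j | c ord0 j != 0%R] \subset ~: T0.
      apply/subsetP => j; rewrite !inE; apply: contra => jT; by rewrite cT.
    have := subset_leq_card sub; have := cardsC T0; rewrite card_ord dm1 cT0.
    move: (#|~: T0|) (#|[set j | c ord0 j != 0%R]|) => a b; lia.
  case/existsP: (so _ S0 cS) => i ci.
  have sum0 := orth (row_sub i H) cV.
  have := orth_notcov sum0.
  have -> : [set j in [set j | c ord0 j != 0%R] | row i H ord0 j != 0%R]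
         = [set j in [set j | c ord0 j != 0%R] | H i j != 0%R].
    by apply/setP => j; rewrite !inE mxE.
  by rewrite ci.
have [rho [[Hr [pcr sdr]] minr]] := @min_exists (stop_achievable G d) #|Tf|
  (ex_intro _ H (conj pc (conj so nso))).
exists rho; split.
  split => //; by exists Hr.
rewrite -cTf; apply: minr; by exists H.
Qed.
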